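(* Let $\ell,m,n$ be positive integers with $\ell<n$, $m<n$, $\gcd(m,n)=1$, and let $d\in\{1,\dots,n-1\}$ be the multiplicative inverse of $m$ modulo $n$. If $\ell\ne1$ then $$\mathcal{F}[\ell,m,n]^{\overline{(\ell-1)d}}=\mathcal{F}[\ell-1,m,n],\qquad \mathcal{F}[\ell,m,n]^{\overline{0}}=\mathcal{F}[\ell-1,m,n]^{(-d)},$$ and if $\ell\ne n-1$ then $$\mathcal{F}[\ell,m,n]^{\overline{\ell d}}=\mathcal{F}[\ell+1,m,n],\qquad \mathcal{F}[\ell,m,n]^{\overline{-d}}=\mathcal{F}[\ell+1,m,n]^{(d)}.$$
   Context: For positive integers $\ell<n$, $m<n$ with $\gcd(m,n)=1$, $\mathcal{F}[\ell,m,n]:\mathbb{Z}\to\{L,R\}$ is defined by $\mathcal{F}[\ell,m,n]_i=L$ if $im\bmod n<\ell$ and $R$ if $im \bmod n\ge\ell$; it is periodic with period $n$. For a sequence $\mathcal{S}$ of period $n$ and $j\in\mathbb{Z}$: $\mathcal{S}^{(j)}$ is the $j$-th left shift, $\mathcal{S}^{(j)}_i=\mathcal{S}_{i+j}$; $\mathcal{S}^{\overline j}$ is the sequence that differs from $\mathcal{S}$ exactly at the indices $j+kn$, $k\in\mathbb{Z}$ (the symbol $L$ is swapped with $R$ there). Indices such as $-d$ and $(\ell-1)d$ are taken modulo $n$. *)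

(* Defs.v *)
From mathcomp Require Import all_boot all_order all_algebra.
Set Implicit Arguments. Unset Strict Implicit. Unset Printing Implicit Defensive.
Import Order.TTheory GRing.Theory Num.Theory.
Local Open Scope ring_scope.

Inductive LR := L | R.

Definition swapLR (x : LR) : LR := match x with L => R | R => L end.

Definition F (l m n : nat) (i : int) : LR :=
  if ((i * m%:Z) %% n%:Z)%Z < l%:Z then L else R.

Definition seq_shift (S : int -> LR) (j : int) : int -> LR := fun i => S (i + j).

Definition seq_flip (n : nat) (S : int -> LR) (j : int) : int -> LR :=
  fun i => if (i == j %[mod n%:Z])%Z then swapLR (S i) else S i.

(* Main.v *)
Require Import Defs.
From Stdlib Require Import FunctionalExtensionality.
From mathcomp Require Import all_boot all_order all_algebra.
From mathcomp Require Import zify.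
Import Order.TTheory GRing.Theory Num.Theory.

Local Open Scope ring_scope.

Lemma mod_char (a c x n : int) : 0 <= x -> x < n -> a = c * n + x -> modz a n = x.
Proof. by move=> h0 h1 ->; rewrite modzMDl modz_small ?h0. Qed.

Theorem proposition3p1 (l m n d : nat) :
  (0 < l)%N -> (0 < m)%N -> (l < n)%N -> (m < n)%N -> coprime m n ->
  (1 <= d <= n.-1)%N -> (m * d == 1 %[mod n])%N ->
  ((l != 1%N) ->
     seq_flip n (F l m n) ((Posz l - 1) * Posz d)%R = F l.-1 m n /\
     seq_flip n (F l m n) (0 : int) = seq_shift (F l.-1 m n) (- Posz d)%R) /\
  ((l != n.-1) ->
     seq_flip n (F l m n) (Posz l * Posz d)%R = F l.+1 m n /\
     seq_flip n (F l m n) (- Posz d)%R = seq_shift (F l.+1 m n) (Posz d)).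
Proof.
move=> l0 m0 ln mn cop dB hmd.
have n1 : (1 < n)%N by lia.
have hn : (0 < Posz n) by lia.
have hdm : modz (Posz d * Posz m) n = 1.
  rewrite -PoszM modz_nat mulnC (eqP hmd) modn_small //.
have cong : forall i j : int, (i == j %[mod n])%Z = (modz (i * m) n == modz (j * m) n).
  move=> i j; apply/idP/idP => /eqP h.
    by rewrite -modzMml h modzMml.
  have e : forall k : int, modz k n = modz (modz (k * m) n * d) n.
    by move=> k; rewrite modzMml -mulrA [(m : int) * d]mulrC -modzMmr hdm mulr1.
  by rewrite e h -e.
have shD : forall i : int, modz ((i + d) * m) n = modz (modz (i * m) n + 1) n.
  by move=> i; rewrite mulrDl -(modzDml (i * m)) -(modzDmr _ (Posz d * Posz m)) hdm.
have shN : forall i : int, modz ((i - Posz d) * m) n = modz (modz (i * m) n - 1) n.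
  by move=> i; rewrite mulrBl -(modzDml (i * m)) -(modzDmr _ (- (Posz d * Posz m))) -(modzNm (Posz d * Posz m)) hdm modzDmr.
have mc : forall c : int, 0 <= c -> c < n -> modz (c * d * m) n = c.
  move=> c c0 c1; rewrite -mulrA -modzMmr hdm mulr1 modz_small //; lia.
have mN : modz (- Posz d * m) n = Posz n - 1.
  rewrite mulNr -modzNm hdm.
  apply: (@mod_char _ (-1)); lia.
have m0' : modz ((0 : int) * m) n = 0 by rewrite mul0r modz_small //; lia.
have bnd : forall i : int, 0 <= modz (i * m) n /\ modz (i * m) n < n.
  move=> i; split; [apply: modz_ge0 | apply: ltz_pmod]; lia.
have small1 : forall x : int, 0 <= x -> x < n ->
    modz (x + 1) n = (if x == Posz n - 1 then 0 else x + 1).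
  move=> x x0 x1; case: eqP => e.
    apply: (@mod_char _ 1); lia.
  rewrite modz_small //; lia.
have smallN : forall x : int, 0 <= x -> x < n ->
    modz (x - 1) n = (if x == 0 then Posz n - 1 else x - 1).
  move=> x x0 x1; case: eqP => e.
    apply: (@mod_char _ (-1)); lia.
  rewrite modz_small //; lia.
rewrite /seq_flip /seq_shift /F.
split=> hl; split; apply: functional_extensionality => i;
  rewrite cong ?mc ?mN ?m0' ?shD ?shN; try lia;
  case: (bnd i) => b0 b1;
  rewrite ?small1 ?smallN //;
  move: b0 b1; set x := modz (i * m) n => b0 b1;
  clearbody x; clear -b0 b1 ln l0 hl;
  repeat (case: ifP => ? //=); lia.
Qed.
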